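(* Let $N\in\mathbb{N}$. Let $$\mathcal{B}(N)=\{(q_1,q_2)\in\mathbb{Z}^2\mid 3q_1^2+3q_2^2-2q_1-q_2=N\},$$ let $\mathcal{U}(12N+5)=\{(x,y)\in\mathbb{Z}^2\mid x^2+y^2=12N+5\}$, and let $\varphi:\mathcal{B}(N)\to\mathcal{U}(12N+5)$ be the (well-defined) map $\varphi(q_1,q_2)=(6q_1-2,\,6q_2-1)$. Let the dihedral group $D_8=\langle r,s\mid r^4=s^2=(rs)^2=1\rangle$ act on $\mathcal{U}(12N+5)$ by $r(x,y)=(-y,x)$ and $s(x,y)=(y,x)$. Then: (1) the action of $D_8$ on $\mathcal{U}(12N+5)$ is free; (2) $\varphi(\mathcal{B}(N))$ is a complete set of representatives of the $D_8$-orbits of $\mathcal{U}(12N+5)$.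
   Context: The expression $3q_1^2+3q_2^2-2q_1-q_2$ is the $\Lambda_0$-atomic length of the element $q=\sqrt2q_1\varepsilon_1+\sqrt2q_2\varepsilon_2$ of the lattice $M$ in affine type $D_3^{(2)}$, so $\mathcal{B}(N)$ parametrises the affine Grassmannian elements of type $D_3^{(2)}$ of atomic length $N$. *)

(* Defs.v *)
From mathcomp Require Import all_boot all_order all_algebra.
Set Implicit Arguments. Unset Strict Implicit. Unset Printing Implicit Defensive.
Import Order.TTheory GRing.Theory Num.Theory.
Local Open Scope ring_scope.

Definition inB (N : nat) (q : int * int) : Prop :=
  3 * q.1 ^+ 2 + 3 * q.2 ^+ 2 - 2 * q.1 - q.2 = N%:Z.

Definition inU (M : int) (u : int * int) : Prop :=
  u.1 ^+ 2 + u.2 ^+ 2 = M.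

Definition phi (q : int * int) : int * int := (6 * q.1 - 2, 6 * q.2 - 1).

Definition rot (u : int * int) : int * int := (- u.2, u.1).
Definition refl (u : int * int) : int * int := (u.2, u.1).

(* The dihedral group D_8 = <r,s | r^4 = s^2 = (rs)^2 = 1> has the 8 elements
   r^k s^e (k < 4, e in {0,1}); we index them by pairs (k, e).
   The identity is (0, false). *)
Definition D8 := ('I_4 * bool)%type.
Definition D8_one : D8 := (ord0, false).

Definition D8_act (g : D8) (u : int * int) : int * int :=
  iter (nat_of_ord g.1) rot (if g.2 then refl u else u).

(* Main.v *)
Require Import Defs.
From mathcomp Require Import all_boot all_order all_algebra.
From mathcomp Require Import zify.
Import Order.TTheory GRing.Theory Num.Theory.
Local Open Scope ring_scope.

Lemma d6 (x : int) : exists k r : int, x = 6 * k + r /\ 0 <= r < 6.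
Proof. exists (x %/ 6)%Z, (x %% 6)%Z. rewrite {1}(divz_eq x 6) mulrC modz_ge0 //=. split=>//. exact: ltz_pmod. Qed.

Lemma cls {x y N : int} : x ^+ 2 + y ^+ 2 = 12 * N + 5 -> exists k l : int,
  ((x = 6 * k + 4 \/ x = 6 * k + 2) /\ (y = 6 * l + 5 \/ y = 6 * l + 1)) \/
  ((y = 6 * l + 4 \/ y = 6 * l + 2) /\ (x = 6 * k + 5 \/ x = 6 * k + 1)).
Proof.
move=> H; have [k [r [Ex Hr]]] := d6 x; have [l [s [Ey Hs]]] := d6 y; subst x y.
exists k, l.
have : r = 0 \/ r = 1 \/ r = 2 \/ r = 3 \/ r = 4 \/ r = 5 by lia.
have : s = 0 \/ s = 1 \/ s = 2 \/ s = 3 \/ s = 4 \/ s = 5 by lia.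
by move=> [Es|[Es|[Es|[Es|[Es|Es]]]]] [Er|[Er|[Er|[Er|[Er|Er]]]]]; subst r s; lia.
Qed.

Theorem theorem8p17 (N : nat) :
  (* phi is well defined: B(N) -> U(12N+5) *)
  (forall q, inB N q -> inU (12 * N%:Z + 5) (phi q)) /\
  (* (1) the D_8 action on U(12N+5) is free *)
  (forall (g : D8) u, inU (12 * N%:Z + 5) u -> D8_act g u = u -> g = D8_one) /\
  (* (2a) every orbit meets phi(B(N)) *)
  (forall u, inU (12 * N%:Z + 5) u ->
     exists (g : D8) q, inB N q /\ D8_act g (phi q) = u) /\
  (* (2b) each orbit meets phi(B(N)) in at most one point *)
  (forall (g : D8) q q', inB N q -> inB N q' ->
     D8_act g (phi q) = phi q' -> phi q = phi q').
Proof.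
split.
  move=> [q1 q2]; rewrite /inB /inU /phi /= => H; lia.
split.
  move=> [[k hk] e] [x y]; rewrite /inU /= => /cls [a [b Hc]].
  case: k hk => [|[|[|[|k]]]] hk //; case: e;
    rewrite /D8_act /Defs.rot /Defs.refl /= => E; try (case: E; intros; exfalso; lia).
  by apply/eqP.
split.
  move=> [x y]; rewrite /inU /= => H; have [k [l Hc]] := cls H.
  case: Hc => [[[Ex|Ex] [Ey|Ey]]|[[Ey|Ey] [Ex|Ex]]]; subst x y.
  - exists (@Ordinal 4 0 isT, false), (k + 1, l + 1); rewrite /inB /D8_act /phi /Defs.rot /Defs.refl /=.
    split; [lia | congr pair; lia].
  - exists (@Ordinal 4 3 isT, true), (k + 1, - l); rewrite /inB /D8_act /phi /Defs.rot /Defs.refl /=.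
    split; [lia | congr pair; lia].
  - exists (@Ordinal 4 1 isT, true), (- k, l + 1); rewrite /inB /D8_act /phi /Defs.rot /Defs.refl /=.
    split; [lia | congr pair; lia].
  - exists (@Ordinal 4 2 isT, false), (- k, - l); rewrite /inB /D8_act /phi /Defs.rot /Defs.refl /=.
    split; [lia | congr pair; lia].
  - exists (@Ordinal 4 0 isT, true), (l + 1, k + 1); rewrite /inB /D8_act /phi /Defs.rot /Defs.refl /=.
    split; [lia | congr pair; lia].
  - exists (@Ordinal 4 1 isT, false), (l + 1, - k); rewrite /inB /D8_act /phi /Defs.rot /Defs.refl /=.
    split; [lia | congr pair; lia].
  - exists (@Ordinal 4 3 isT, false), (- l, k + 1); rewrite /inB /D8_act /phi /Defs.rot /Defs.refl /=.
    split; [lia | congr pair; lia].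
  - exists (@Ordinal 4 2 isT, true), (- l, - k); rewrite /inB /D8_act /phi /Defs.rot /Defs.refl /=.
    split; [lia | congr pair; lia].
move=> [[k hk] e] [q1 q2] [q1' q2'] _ _.
case: k hk => [|[|[|[|k]]]] hk //; case: e;
  rewrite /D8_act /phi /Defs.rot /Defs.refl /= => E; try (case: E; intros; exfalso; lia); case: E => E1 E2.
by rewrite E1 E2.
Qed.
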